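(* Let $\gamma>0$ and $R\ge600(\gamma^{3/4}+\gamma^{-3/4})$. For every $j\in\mathbb{N}$, the equation $w=G_{j,R}(w)$ has a unique solution in $F_\infty$, and this solution lies in $F_j$. The solutions for different $j$ are different.
   Context: $\arg_-(\zeta)\in[-\pi,\pi)$, $\mathrm{sq}_-(\zeta)=\sqrt{|\zeta|}e^{\frac i2\arg_-(\zeta)}$. For $j\in\mathbb{N}$: $A(w)=\log\left|\frac{\mathrm{sq}_-(w^2+i\gamma)-w}{\mathrm{sq}_-(w^2+i\gamma)+w}\right|$, $B_j(w)=\arg_-\!\left(\frac{\mathrm{sq}_-(w^2+i\gamma)-w}{\mathrm{sq}_-(w^2+i\gamma)+w}\right)+2\pi j$, $G_{j,R}(w)=\frac{-B_j(w)+iA(w)}{2R}$. The sets are $F_\infty=\{w\in\mathbb{C}:\operatorname{Re}w\le0\le\operatorname{Im}w,\ |\operatorname{Re}w|\ge2\operatorname{Im}w\}$ and $F_j=\{w\in F_\infty: B_j(w)\ge2|A(w)|\}$. *)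

(* Defs.v *)
From Stdlib Require Import Reals.
From Coquelicot Require Import Coquelicot.
Open Scope R_scope.

(* Principal argument with branch cut convention arg_-(z) in [-pi, pi):
   the negative real axis gets argument -pi.  arg_-(0) := 0 (irrelevant). *)
Definition arg_m (z : C) : R :=
  let x := fst z in let y := snd z in
  if Rlt_dec 0 x then atan (y / x)
  else if Rlt_dec x 0 then
         (if Rlt_dec 0 y then atan (y / x) + PI else atan (y / x) - PI)
  else if Rlt_dec 0 y then PI / 2
  else if Rlt_dec y 0 then - (PI / 2)
  else 0.

Definition sq_m (z : C) : C :=
  (sqrt (Cmod z) * cos (arg_m z / 2), sqrt (Cmod z) * sin (arg_m z / 2)).

Definition Qfrac (gamma : R) (w : C) : C :=
  let s := sq_m (Cplus (Cmult w w) (0, gamma)) in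
  Cdiv (Cminus s w) (Cplus s w).

Definition A_fun (gamma : R) (w : C) : R := ln (Cmod (Qfrac gamma w)).

Definition B_fun (gamma : R) (j : nat) (w : C) : R :=
  arg_m (Qfrac gamma w) + 2 * PI * INR j.

Definition G_fun (gamma : R) (j : nat) (Rr : R) (w : C) : C :=
  (- B_fun gamma j w / (2 * Rr), A_fun gamma w / (2 * Rr)).

Definition F_inf (w : C) : Prop :=
  fst w <= 0 /\ 0 <= snd w /\ 2 * snd w <= Rabs (fst w).

Definition F_j (gamma : R) (j : nat) (w : C) : Prop :=
  F_inf w /\ 2 * Rabs (A_fun gamma w) <= B_fun gamma j w.

(* Main.v *)
Require Import Defs.
From Stdlib Require Import Reals Lra Psatz.
From Coquelicot Require Import Coquelicot.
Open Scope R_scope.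
Set Bullet Behavior "Strict Subproofs".

Lemma dR_eq (f : R -> R) (t a b : R) : is_derive f t a -> a = b -> is_derive f t b.
Proof. intros H ->; exact H. Qed.

Lemma dR_plus (f g : R -> R) (t a b : R) : is_derive f t a -> is_derive g t b ->
  is_derive (fun u => f u + g u) t (a + b).
Proof. intros H H0; exact (is_derive_plus f g t a b H H0). Qed.

Lemma dR_minus (f g : R -> R) (t a b : R) : is_derive f t a -> is_derive g t b ->
  is_derive (fun u => f u - g u) t (a - b).
Proof. intros H H0; exact (is_derive_minus f g t a b H H0). Qed.

Lemma dR_opp (f : R -> R) (t a : R) : is_derive f t a -> is_derive (fun u => - f u) t (- a).
Proof. intros H; exact (is_derive_opp f t a H). Qed.

Lemma dR_mult (f g : R -> R) (t a b : R) : is_derive f t a -> is_derive g t b ->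
  is_derive (fun u => f u * g u) t (a * g t + f t * b).
Proof. intros H H0. exact (is_derive_mult f g t a b H H0 Rmult_comm). Qed.

Lemma dR_const (c t : R) : is_derive (fun _ => c) t 0.
Proof. exact (is_derive_const (V:=R_NormedModule) c t). Qed.

Lemma dR_affine (c d t : R) : is_derive (fun u => c + u * d) t d.
Proof. eapply dR_eq. apply dR_plus. apply dR_const. apply dR_mult. eapply is_derive_id. apply dR_const.
  simpl. change (one) with 1. ring. Qed.

Lemma dR_inv (f : R -> R) (t a : R) : is_derive f t a -> f t <> 0 ->
  is_derive (fun u => / f u) t (- a / (f t) ^ 2).
Proof. intros; apply is_derive_inv; auto. Qed.

Lemma dR_div (f g : R -> R) (t a b : R) : is_derive f t a -> is_derive g t b -> g t <> 0 ->
  is_derive (fun u => f u / g u) t ((a * g t - f t * b) / (g t) ^ 2).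
Proof. intros; apply is_derive_div; auto. Qed.

Lemma dR_comp (F : R -> R) dF (g : R -> R) t b : is_derive F (g t) dF -> is_derive g t b ->
  is_derive (fun u => F (g u)) t (b * dF).
Proof. intros H H0. exact (is_derive_comp F g t dF b H H0). Qed.

Lemma dR_sqrt (f : R -> R) (t a : R) : is_derive f t a -> 0 < f t ->
  is_derive (fun u => sqrt (f u)) t (a / (2 * sqrt (f t))).
Proof. intros; apply is_derive_sqrt; auto. Qed.

Lemma dR_ln (f : R -> R) (t a : R) : is_derive f t a -> 0 < f t ->
  is_derive (fun u => ln (f u)) t (a / f t).
Proof. intros H Hp. eapply dR_eq. apply dR_comp. apply is_derive_ln; auto. exact H.
  reflexivity. Qed.

Lemma dR_atan (f : R -> R) (t a : R) : is_derive f t a ->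
  is_derive (fun u => atan (f u)) t (a / (1 + (f t)^2)).
Proof. intros H. eapply dR_eq. apply dR_comp. apply is_derive_atan. exact H.
  unfold Rsqr, Rdiv; simpl. rewrite Rmult_1_r. reflexivity. Qed.

Lemma dR_cos (f : R -> R) (t a : R) : is_derive f t a ->
  is_derive (fun u => cos (f u)) t (- a * sin (f t)).
Proof. intros H. eapply dR_eq. apply dR_comp. apply is_derive_cos. exact H. ring. Qed.

Lemma dR_sin (f : R -> R) (t a : R) : is_derive f t a ->
  is_derive (fun u => sin (f u)) t (a * cos (f t)).
Proof. intros H. eapply dR_eq. apply dR_comp. apply is_derive_sin. exact H. ring. Qed.

Lemma dR_cont (f : R -> R) (t a : R) : is_derive f t a -> continuity_pt f t.
Proof. intros H. apply continuity_pt_filterlim.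
  exact (ex_derive_continuous (K:=R_AbsRing) (V:=R_NormedModule) f t (ex_intro _ a H)). Qed.

Lemma dR_loc_pos (f : R -> R) (t a : R) : is_derive f t a -> 0 < f t -> locally t (fun u => 0 < f u).
Proof. intros H Hp.
  assert (Hc : filterlim f (locally t) (locally (f t))).
  { exact (ex_derive_continuous (K:=R_AbsRing) (V:=R_NormedModule) f t (ex_intro _ a H)). }
  apply Hc. apply (open_gt 0). exact Hp. Qed.

Lemma dR_loc_neg (f : R -> R) (t a : R) : is_derive f t a -> f t < 0 -> locally t (fun u => f u < 0).
Proof. intros H Hp.
  assert (Hc : filterlim f (locally t) (locally (f t))).
  { exact (ex_derive_continuous (K:=R_AbsRing) (V:=R_NormedModule) f t (ex_intro _ a H)). }
  apply (Hc (fun y => y < 0)). apply (open_lt 0). exact Hp. Qed.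

Lemma arg_pos_re x y : 0 < x -> arg_m (x,y) = atan (y/x).
Proof. intros H. unfold arg_m; simpl. destruct (Rlt_dec 0 x); [reflexivity|lra]. Qed.

Lemma atan_inv' u : 0 < u -> atan u = PI/2 - atan (/u).
Proof. intros H. rewrite atan_inv; [ring|auto]. Qed.

Lemma arg_pos_im x y : 0 < y -> arg_m (x,y) = PI/2 - atan (x/y).
Proof. intros H. unfold arg_m; simpl.
  destruct (Rlt_dec 0 x).
  - rewrite atan_inv'. replace (/ (y/x)) with (x/y) by (field; lra). reflexivity.
    apply Rdiv_lt_0_compat; lra.
  - destruct (Rlt_dec x 0).
    + destruct (Rlt_dec 0 y); [|lra].
      replace (y/x) with (- (y / -x)) by (field; lra). rewrite atan_opp.
      rewrite atan_inv'. replace (/ (y/ -x)) with (- (x/y)) by (field; lra).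
      rewrite atan_opp. lra.
      apply Rdiv_lt_0_compat; lra.
    + destruct (Rlt_dec 0 y); [|lra].
      replace x with 0 by lra. unfold Rdiv. rewrite Rmult_0_l, atan_0. lra.
Qed.

Lemma arg_neg_im x y : y < 0 -> arg_m (x,y) = -(PI/2) - atan (x/y).
Proof. intros H. unfold arg_m; simpl.
  destruct (Rlt_dec 0 x).
  - replace (y/x) with (- (-y / x)) by (field; lra). rewrite atan_opp.
    rewrite atan_inv'. replace (/ (-y/x)) with (- (x/y)) by (field; lra).
    rewrite atan_opp. lra.
    apply Rdiv_lt_0_compat; lra.
  - destruct (Rlt_dec x 0).
    + destruct (Rlt_dec 0 y); [lra|].
      rewrite atan_inv'. replace (/ (y/x)) with (x/y) by (field; lra). lra.
      replace (y/x) with ((-y)/(-x)) by (field; lra). apply Rdiv_lt_0_compat; lra.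
    + destruct (Rlt_dec 0 y); [lra|].
      destruct (Rlt_dec y 0); [|lra].
      replace x with 0 by lra. unfold Rdiv. rewrite Rmult_0_l, atan_0. lra.
Qed.

Lemma sqrt_sq_factor x y : x <> 0 ->
  sqrt (x ^ 2 + y ^ 2) = Rabs x * sqrt (1 + (y/x)^2).
Proof. intros H.
  replace (x ^ 2 + y ^ 2) with (x^2 * (1 + (y/x)^2)) by (field; auto).
  rewrite sqrt_mult. rewrite <- sqrt_Rsqr_abs. unfold Rsqr. replace (x*x) with (x^2) by ring. reflexivity.
  apply pow2_ge_0. apply Rplus_le_le_0_compat. lra. apply pow2_ge_0. Qed.

Lemma arg_polar x y : (x,y) <> (0,0) ->
  Cmod (x,y) * cos (arg_m (x,y)) = x /\ Cmod (x,y) * sin (arg_m (x,y)) = y.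
Proof. intros Hz. unfold Cmod; simpl fst; simpl snd.
  destruct (Req_dec x 0) as [Hx|Hx].
  - subst x. destruct (Rtotal_order y 0) as [Hy|[Hy|Hy]].
    + rewrite arg_neg_im; auto. replace (0/y) with 0 by (field; lra). rewrite atan_0, Rminus_0_r.
      rewrite cos_neg, sin_neg, cos_PI2, sin_PI2.
      replace (0 ^ 2 + y ^ 2) with (Rsqr y) by (unfold Rsqr; ring).
      rewrite sqrt_Rsqr_abs, Rabs_left; auto. split; ring.
    + subst; exfalso; apply Hz; reflexivity.
    + rewrite arg_pos_im; auto. replace (0/y) with 0 by (field; lra). rewrite atan_0, Rminus_0_r.
      rewrite cos_PI2, sin_PI2.
      replace (0 ^ 2 + y ^ 2) with (Rsqr y) by (unfold Rsqr; ring).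
      rewrite sqrt_Rsqr_abs, Rabs_right; [|lra]. split; ring.
  - rewrite sqrt_sq_factor; auto.
    assert (Hc : 0 < sqrt (1 + (y/x)^2)).
    { apply sqrt_lt_R0. assert (0 <= (y/x)^2) by apply pow2_ge_0. lra. }
    unfold arg_m; simpl fst; simpl snd.
    destruct (Rlt_dec 0 x).
    + rewrite cos_atan, sin_atan. unfold Rsqr. rewrite Rabs_right; [|lra].
      replace (1 + y / x * (y / x)) with (1 + (y/x)^2) by ring.
      split; field; repeat split; lra.
    + destruct (Rlt_dec x 0); [|lra].
      assert (Ec : forall a, cos (a + PI) = - cos a) by (intros; rewrite neg_cos; reflexivity).
      assert (Es : forall a, sin (a + PI) = - sin a) by (intros; rewrite neg_sin; reflexivity).
      assert (Ec' : forall a, cos (a - PI) = - cos a).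
      { intros. replace (a - PI) with ((a - PI) + PI - PI) by ring.
        rewrite <- (Rplus_0_r (a - PI + PI - PI)). 
        replace (a - PI + PI - PI + 0) with (-(PI - a)) by ring. rewrite cos_neg.
        rewrite cos_minus, cos_PI, sin_PI. ring. }
      assert (Es' : forall a, sin (a - PI) = - sin a).
      { intros. rewrite sin_minus, cos_PI, sin_PI. ring. }
      rewrite Rabs_left; auto.
      destruct (Rlt_dec 0 y).
      * rewrite Ec, Es, cos_atan, sin_atan. unfold Rsqr.
        replace (1 + y / x * (y / x)) with (1 + (y/x)^2) by ring.
        split; field; repeat split; lra.
      * rewrite Ec', Es', cos_atan, sin_atan. unfold Rsqr.
        replace (1 + y / x * (y / x)) with (1 + (y/x)^2) by ring.
        split; field; repeat split; lra.
Qed.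

Definition cd (f : R -> C) (t : R) (v : C) :=
  is_derive (fun u => fst (f u)) t (fst v) /\ is_derive (fun u => snd (f u)) t (snd v).

Lemma d_arg (q : R -> C) t a : cd q t a -> (0 < fst (q t) \/ snd (q t) <> 0) ->
  is_derive (fun u => arg_m (q u)) t (snd (Cmult a (Cinv (q t)))).
Proof.
  intros [H1 H2] Hc.
  set (x := fst (q t)) in *. set (y := snd (q t)) in *.
  assert (HD : x ^ 2 + y ^ 2 <> 0).
  { destruct Hc as [Hc|Hc]; [assert (0 < x^2) by (apply pow_lt; lra)|assert (0 < y^2) by (apply pow2_gt_0; auto)];
    assert (0 <= x^2) by apply pow2_ge_0; assert (0 <= y^2) by apply pow2_ge_0; lra. }
  assert (HDp : 0 < x * x + y * y).
  { destruct Hc as [Hc|Hc]; [nra|]. assert (0 < y*y) by (apply Rsqr_pos_lt; auto). nra. }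
  destruct (Rlt_dec 0 x) as [Hx|Hx].
  - apply (is_derive_ext_loc (K:=R_AbsRing) (V:=R_NormedModule) (fun u => atan (snd (q u) / fst (q u)))).
    + eapply filter_imp; [|exact (dR_loc_pos _ _ _ H1 Hx)].
      intros u Hu. simpl in Hu. destruct (q u) as [xu yu]. simpl in Hu. rewrite arg_pos_re by exact Hu.
      reflexivity.
    + eapply dR_eq. apply dR_atan. apply dR_div; eauto. change (fst (q t)) with x; lra.
      unfold Cinv, Cmult; simpl. fold x y. field. split; lra.
  - destruct Hc as [Hc|Hc]; [lra|].
    assert (Hy : y <> 0) by exact Hc.
    destruct (Rlt_dec 0 y) as [Hy'|Hy'].
    + apply (is_derive_ext_loc (K:=R_AbsRing) (V:=R_NormedModule) (fun u => PI/2 - atan (fst (q u) / snd (q u)))).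
      * eapply filter_imp; [|exact (dR_loc_pos _ _ _ H2 Hy')].
        intros u Hu. simpl in Hu. destruct (q u) as [xu yu]. simpl in Hu. rewrite arg_pos_im by exact Hu.
        reflexivity.
      * eapply dR_eq. apply dR_minus. apply dR_const. apply dR_atan. apply dR_div; eauto.
        unfold Cinv, Cmult; simpl. fold x y. field. split; lra.
    + assert (Hy'' : y < 0) by lra.
      apply (is_derive_ext_loc (K:=R_AbsRing) (V:=R_NormedModule) (fun u => -(PI/2) - atan (fst (q u) / snd (q u)))).
      * eapply filter_imp; [|exact (dR_loc_neg _ _ _ H2 Hy'')].
        intros u Hu. simpl in Hu. destruct (q u) as [xu yu]. simpl in Hu. rewrite arg_neg_im by exact Hu.
        reflexivity.
      * eapply dR_eq. apply dR_minus. apply dR_const. apply dR_atan. apply dR_div; eauto.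
        unfold Cinv, Cmult; simpl. fold x y. field. split; lra.
Qed.

Lemma dR_pow2 (f : R -> R) (t a : R) : is_derive f t a ->
  is_derive (fun u => f u ^ 2) t (2 * f t * a).
Proof. intros H. eapply dR_eq. exact (is_derive_pow f 2 t a H). simpl. ring. Qed.

Lemma cd_eq f t a b : cd f t a -> a = b -> cd f t b.
Proof. intros H ->; exact H. Qed.

Lemma cd_const (c : C) t : cd (fun _ => c) t (0,0).
Proof. split; apply dR_const. Qed.

Lemma cd_path (x0 y0 dx dy t : R) :
  cd (fun u => (x0 + u * dx, y0 + u * dy)) t (dx, dy).
Proof. split; simpl; apply dR_affine. Qed.

Lemma cd_plus f g t a b : cd f t a -> cd g t b ->
  cd (fun u => Cplus (f u) (g u)) t (Cplus a b).
Proof. intros [H1 H2] [H3 H4]. split; simpl; apply dR_plus; auto. Qed.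

Lemma cd_minus f g t a b : cd f t a -> cd g t b ->
  cd (fun u => Cminus (f u) (g u)) t (Cminus a b).
Proof. intros [H1 H2] [H3 H4]. split; simpl; apply dR_plus; auto; apply dR_opp; auto. Qed.

Lemma cd_mult f g t a b : cd f t a -> cd g t b ->
  cd (fun u => Cmult (f u) (g u)) t (Cplus (Cmult a (g t)) (Cmult (f t) b)).
Proof. intros [H1 H2] [H3 H4]. split; simpl.
  - eapply dR_eq. apply dR_minus; apply dR_mult; eauto. simpl. ring.
  - eapply dR_eq. apply dR_plus; apply dR_mult; eauto. simpl. ring.
Qed.

Lemma cd_inv f t a : cd f t a -> f t <> (0,0) ->
  cd (fun u => Cinv (f u)) t (Copp (Cmult a (Cmult (Cinv (f t)) (Cinv (f t))))).
Proof. intros [H1 H2] Hn.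
  assert (HD : 0 < fst (f t) ^ 2 + snd (f t) ^ 2).
  { destruct (f t) as [x y]; simpl.
    destruct (Req_dec x 0); [destruct (Req_dec y 0)|].
    - subst; exfalso; apply Hn; reflexivity.
    - assert (0 < y^2) by (apply pow2_gt_0; auto). assert (0 <= x^2) by apply pow2_ge_0. lra.
    - assert (0 < x^2) by (apply pow2_gt_0; auto). assert (0 <= y^2) by apply pow2_ge_0. lra. }
  assert (HD' : forall u, fst (f u) ^ 2 + snd (f u) ^ 2 = (fun u => fst (f u) ^ 2 + snd (f u) ^ 2) u) by reflexivity.
  assert (Hd : is_derive (fun u => fst (f u) ^ 2 + snd (f u) ^ 2) t
     (2 * fst (f t) * fst a + 2 * snd (f t) * snd a)).
  { apply dR_plus; apply dR_pow2; auto. }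
  split; simpl.
  - eapply dR_eq. apply dR_div. exact H1. exact Hd. lra.
    simpl. field. lra.
  - eapply dR_eq. apply dR_div. apply dR_opp; exact H2. exact Hd. lra.
    simpl. field. lra.
Qed.

Lemma cd_div f g t a b : cd f t a -> cd g t b -> g t <> (0,0) ->
  cd (fun u => Cdiv (f u) (g u)) t
    (Cplus (Cmult a (Cinv (g t))) (Cmult (f t) (Copp (Cmult b (Cmult (Cinv (g t)) (Cinv (g t))))))).
Proof. intros H1 H2 Hn. unfold Cdiv. apply cd_mult; auto. apply cd_inv; auto. Qed.

Lemma C0_pos (z : C) : z <> (0,0) -> 0 < fst z ^ 2 + snd z ^ 2.
Proof. destruct z as [x y]; simpl. intros Hn.
    destruct (Req_dec x 0); [destruct (Req_dec y 0)|].
    - subst; exfalso; apply Hn; reflexivity.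
    - assert (0 < y^2) by (apply pow2_gt_0; auto). assert (0 <= x^2) by apply pow2_ge_0. lra.
    - assert (0 < x^2) by (apply pow2_gt_0; auto). assert (0 <= y^2) by apply pow2_ge_0. lra.
Qed.

Lemma d_cmod (q : R -> C) t a : cd q t a -> q t <> (0,0) ->
  is_derive (fun u => Cmod (q u)) t (Cmod (q t) * fst (Cmult a (Cinv (q t)))).
Proof. intros [H1 H2] Hn. pose proof (C0_pos _ Hn) as HD.
  unfold Cmod. eapply dR_eq. apply dR_sqrt. apply dR_plus; apply dR_pow2; eauto. exact HD.
  simpl.
  assert (Hr : sqrt (fst (q t) ^ 2 + snd (q t) ^ 2) * sqrt (fst (q t) ^ 2 + snd (q t) ^ 2)
               = fst (q t) ^ 2 + snd (q t) ^ 2) by (apply sqrt_sqrt; lra).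
  assert (Hr0 : 0 < sqrt (fst (q t) ^ 2 + snd (q t) ^ 2)) by (apply sqrt_lt_R0; lra).
  set (x := fst (q t)) in *. set (y := snd (q t)) in *.
  replace (x * (x * 1) + y * (y * 1)) with (x ^ 2 + y ^ 2) by ring.
  set (r := sqrt (x ^ 2 + y ^ 2)) in *.
  rewrite <- Hr. field. lra.
Qed.

Lemma d_lnmod (q : R -> C) t a : cd q t a -> q t <> (0,0) ->
  is_derive (fun u => ln (Cmod (q u))) t (fst (Cmult a (Cinv (q t)))).
Proof. intros H Hn.
  assert (Hc : 0 < Cmod (q t)) by (apply Cmod_gt_0; exact Hn).
  eapply dR_eq. apply dR_ln. apply d_cmod. exact H. exact Hn. exact Hc. cbv beta. field. lra. Qed.

Lemma cut_nz (z : C) : (0 < fst z \/ snd z <> 0) -> z <> (0,0).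
Proof. intros H E. rewrite E in H. simpl in H. destruct H; [lra|auto]. Qed.

Lemma cd_sqm (z : R -> C) t a : cd z t a -> (0 < fst (z t) \/ snd (z t) <> 0) ->
  cd (fun u => sq_m (z u)) t
    (Cmult (sq_m (z t)) (fst (Cmult a (Cinv (z t))) / 2, snd (Cmult a (Cinv (z t))) / 2)).
Proof. intros H Hc. pose proof (cut_nz _ Hc) as Hn.
  assert (HM : 0 < Cmod (z t)) by (apply Cmod_gt_0; exact Hn).
  pose proof (d_cmod z t a H Hn) as Hm.
  pose proof (d_arg z t a H Hc) as Ha.
  assert (Ha2 : is_derive (fun u => arg_m (z u) / 2) t (snd (Cmult a (Cinv (z t))) / 2)).
  { eapply dR_eq. apply dR_div. exact Ha. apply dR_const. lra. cbv beta. field. }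
  assert (Hs : is_derive (fun u => sqrt (Cmod (z u))) t
     (Cmod (z t) * fst (Cmult a (Cinv (z t))) / (2 * sqrt (Cmod (z t))))).
  { apply dR_sqrt; auto. }
  assert (Hr : sqrt (Cmod (z t)) * sqrt (Cmod (z t)) = Cmod (z t)) by (apply sqrt_sqrt; lra).
  assert (Hr0 : 0 < sqrt (Cmod (z t))) by (apply sqrt_lt_R0; lra).
  set (Re := fst (Cmult a (Cinv (z t)))) in *. set (Im := snd (Cmult a (Cinv (z t)))) in *.
  unfold sq_m; split; simpl.
  - eapply dR_eq. apply dR_mult. exact Hs. apply dR_cos. exact Ha2.
    cbv beta.
    set (r := sqrt (Cmod (z t))) in *.
    rewrite <- Hr. field. lra.
  - eapply dR_eq. apply dR_mult. exact Hs. apply dR_sin. exact Ha2.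
    cbv beta.
    set (r := sqrt (Cmod (z t))) in *.
    rewrite <- Hr. field. lra.
Qed.

Lemma sq_facts (z : C) : (0 < fst z \/ (fst z = 0 /\ 0 < snd z)) ->
  Cmult (sq_m z) (sq_m z) = z /\ 0 < fst (sq_m z) /\
  fst (sq_m z) ^ 2 + snd (sq_m z) ^ 2 = Cmod z.
Proof. intros Hz.
  assert (Hn : z <> (0,0)) by (apply cut_nz; destruct Hz as [H|[H1 H2]]; [left|right]; lra).
  assert (HM : 0 < Cmod z) by (apply Cmod_gt_0; exact Hn).
  assert (Hr : sqrt (Cmod z) * sqrt (Cmod z) = Cmod z) by (apply sqrt_sqrt; lra).
  assert (Hr0 : 0 < sqrt (Cmod z)) by (apply sqrt_lt_R0; lra).
  assert (Harg : - PI < arg_m z < PI).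
  { pose proof PI_RGT_0 as HPI. destruct z as [x y]. destruct Hz as [H|[H1 H2]]; simpl in *.
    - rewrite arg_pos_re; auto. pose proof (atan_bound (y/x)). lra.
    - rewrite arg_pos_im; auto. subst x. replace (0/y) with 0 by (field; lra). rewrite atan_0. lra. }
  destruct z as [x y].
  destruct (arg_polar x y Hn) as [Hc Hs].
  unfold sq_m. set (r := sqrt (Cmod (x,y))) in *. set (th := arg_m (x,y)) in *.
  split; [|split].
  - unfold Cmult; simpl.
    assert (E : th = 2 * (th / 2)) by field.
    rewrite E in Hc, Hs. rewrite cos_2a in Hc. rewrite sin_2a in Hs.
    rewrite <- Hr in Hc, Hs. f_equal.
    + rewrite <- Hc. ring.
    + rewrite <- Hs. ring.
  - simpl. apply Rmult_lt_0_compat; auto. apply cos_gt_0; lra.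
  - simpl. rewrite <- Hr. pose proof (sin2_cos2 (th/2)). unfold Rsqr in H.
    replace (r * cos (th / 2) * (r * cos (th / 2) * 1) + r * sin (th / 2) * (r * sin (th / 2) * 1))
      with (r * r * (sin (th / 2) * sin (th / 2) + cos (th / 2) * cos (th / 2))) by ring.
    rewrite H. ring.
Qed.

Definition zf (g : R) (w : C) : C := Cplus (Cmult w w) (0, g).

Lemma z_cond g w : 0 < g -> F_inf w ->
  0 < fst (zf g w) \/ (fst (zf g w) = 0 /\ 0 < snd (zf g w)).
Proof. destruct w as [x y]. unfold F_inf, zf; simpl. intros Hg [H1 [H2 H3]].
  rewrite Rabs_left1 in H3 by lra.
  destruct (Req_dec x 0).
  - subst. right. assert (y = 0) by lra. subst. split; ring_simplify; lra.
  - left. nra.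
Qed.

Lemma z_cut g w : 0 < g -> F_inf w -> 0 < fst (zf g w) \/ snd (zf g w) <> 0.
Proof. intros Hg Hw. destruct (z_cond g w Hg Hw) as [H|[_ H]]; [left|right]; lra. Qed.

Lemma Cmod_z_lb g w : 0 < g -> F_inf w -> 3 * g / 8 <= Cmod (zf g w).
Proof. destruct w as [x y]. unfold F_inf, zf, Cmod; simpl. intros Hg [H1 [H2 H3]].
  rewrite Rabs_left1 in H3 by lra.
  rewrite <- (sqrt_square (3 * g / 8)) by lra.
  apply sqrt_le_1_alt.
  set (X := x * x - y * y + 0). set (Y := x * y + y * x + g).
  assert (HX : 0 <= X) by (unfold X; nra).
  destruct (Rle_lt_dec (x * x) (g / 2)).
  - assert (HY : g / 2 <= Y) by (unfold Y; nra).
    assert (0 <= X * (X * 1)) by nra. nra.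
  - assert (HX' : 3 * g / 8 <= X) by (unfold X; nra).
    assert (0 <= Y * (Y * 1)) by nra. nra.
Qed.

Lemma s_rel g w : 0 < g -> F_inf w ->
  let s := sq_m (zf g w) in
  fst s * fst s - snd s * snd s = fst w * fst w - snd w * snd w /\
  fst s * snd s + snd s * fst s = fst w * snd w + snd w * fst w + g /\
  0 < fst s /\ 3 * g / 8 <= fst s ^ 2 + snd s ^ 2.
Proof. intros Hg Hw s.
  destruct (sq_facts (zf g w) (z_cond g w Hg Hw)) as [E [Hp Hm]].
  fold s in E, Hp, Hm. clearbody s.
  pose proof (Cmod_z_lb g w Hg Hw).
  unfold zf in E. unfold Cmult, Cplus in E. simpl in E.
  injection E as E1 E2. repeat split; try lra.
Qed.

Lemma sw_nz g w : 0 < g -> F_inf w ->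
  let s := sq_m (zf g w) in Cplus s w <> (0,0) /\ Cminus s w <> (0,0).
Proof. intros Hg Hw s. destruct (s_rel g w Hg Hw) as [E1 [E2 [Hp Hm]]]. fold s in E1, E2, Hp, Hm.
  destruct s as [p q]. destruct w as [x y]. simpl in *.
  split; intros E; unfold Cminus, Cplus, Copp in E; simpl in E; injection E as Ea Eb.
  - assert (p = -x) by lra. assert (q = -y) by lra. subst. nra.
  - assert (p = x) by lra. assert (q = y) by lra. subst. nra.
Qed.

Lemma Q_facts g w : 0 < g -> F_inf w ->
  (0 < fst (Qfrac g w) \/ snd (Qfrac g w) <> 0) /\ 1 <= Cmod (Qfrac g w).
Proof. intros Hg Hw.
  destruct (s_rel g w Hg Hw) as [E1 [E2 [Hp Hm]]].
  destruct (sw_nz g w Hg Hw) as [N1 N2].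
  unfold Qfrac. fold (zf g w). set (s := sq_m (zf g w)) in *.
  assert (HD := C0_pos _ N1).
  split.
  - destruct s as [p q]. destruct w as [x y]. unfold F_inf in Hw. simpl in *.
    destruct Hw as [H1 [H2 H3]]. rewrite Rabs_left1 in H3 by lra.
    unfold Cdiv, Cminus, Cplus, Copp, Cmult, Cinv; simpl.
    set (D := (p + x) * ((p + x) * 1) + (q + y) * ((q + y) * 1)) in *.
    destruct (Req_dec (q * x) (p * y)) as [Eq|Neq].
    + left. destruct (Req_dec x 0) as [Hx|Hx].
      * assert (y = 0) by lra. subst x y.
        assert (0 < p * p + q * q) by nra.
        replace ((p + - 0) * ((p + 0) / D) - (q + - 0) * (- (q + 0) / D))
          with ((p * p + q * q) / D) by (field; lra).
        apply Rdiv_lt_0_compat; lra.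
      * exfalso.
        assert (HE : 0 < x * x - y * y) by nra.
        assert (HQ : (q * q - y * y) * (x * x - y * y) = 0).
        { assert (Hsq : q * q * (x * x) = p * p * (y * y)).
          { replace (q*q*(x*x)) with ((q*x)*(q*x)) by ring. rewrite Eq. ring. }
          replace (p * p) with (q * q + (x * x - y * y)) in Hsq by lra.
          rewrite <- (Rminus_diag_eq _ _ Hsq). ring. }
        assert (q * q = y * y) by (apply Rmult_integral in HQ; destruct HQ; lra).
        assert (p * p = x * x) by lra.
        assert (p = - x) by nra.
        subst p. assert (q = - y) by (apply (Rmult_eq_reg_l x); [lra|auto]).
        subst q. nra.
    + right. replace ((p + - x) * (- (q + y) / D) + (q + - y) * ((p + x) / D))
          with (2 * (q * x - p * y) / D) by (field; lra).
      intro E. apply Neq. apply Rmult_integral in E. destruct E as [E|E].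
      * lra.
      * exfalso. assert (0 < / D) by (apply Rinv_0_lt_compat; lra). lra.
  - unfold Cdiv. rewrite Cmod_mult, Cmod_inv by exact N1.
    assert (HC : 0 < Cmod (Cplus s w)) by (apply Cmod_gt_0; exact N1).
    apply (Rmult_le_reg_r (Cmod (Cplus s w))); auto.
    rewrite Rmult_assoc, Rinv_l by lra. rewrite Rmult_1_l, Rmult_1_r.
    unfold Cmod. apply sqrt_le_1_alt.
    destruct s as [p q]. destruct w as [x y]. unfold F_inf in Hw. simpl in *.
    destruct Hw as [H1 [H2 H3]]. rewrite Rabs_left1 in H3 by lra.
    assert (Hqy : q * y <= p * y).
    { destruct (Rle_dec 0 q). 
      - assert (q <= p) by nra. nra.
      - nra. }
    assert (Hpx : p * x + p * y <= 0) by nra.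

    nra.
Qed.

Lemma half_C (c : C) : (fst c / 2, snd c / 2) = Cmult c (Cinv (RtoC 2)).
Proof. destruct c as [a b]. unfold Cmult, Cinv, RtoC; simpl. f_equal; field. Qed.

Lemma alg (s w d : C) : s <> RtoC 0 -> Cplus s w <> RtoC 0 -> Cminus s w <> RtoC 0 ->
  let z := Cmult s s in let z' := Cplus (Cplus (Cmult d w) (Cmult w d)) (RtoC 0) in
  let s' := Cmult s (Cmult (Cmult z' (Cinv z)) (Cinv (RtoC 2))) in
  let Q := Cdiv (Cminus s w) (Cplus s w) in
  let Q' := Cplus (Cmult (Cminus s' d) (Cinv (Cplus s w)))
     (Cmult (Cminus s w) (Copp (Cmult (Cplus s' d) (Cmult (Cinv (Cplus s w)) (Cinv (Cplus s w)))))) in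
  Cmult Q' (Cinv Q) = Cmult (Copp (RtoC 2)) (Cmult d (Cinv s)).
Proof. intros H1 H2 H3 z z' s' Q Q'. unfold Q', Q, s', z', z.
  field. repeat split; auto. Qed.

Definition path (w0 : C) (dx dy : R) (u : R) : C := (fst w0 + u * dx, snd w0 + u * dy).

Lemma deriv_path g w0 dx dy t : 0 < g -> F_inf (path w0 dx dy t) ->
  let s := sq_m (zf g (path w0 dx dy t)) in
  let k := Cmult (Copp (RtoC 2)) (Cmult (dx,dy) (Cinv s)) in
  is_derive (fun u => ln (Cmod (Qfrac g (path w0 dx dy u)))) t (fst k) /\
  is_derive (fun u => arg_m (Qfrac g (path w0 dx dy u))) t (snd k).
Proof. intros Hg Hw s k.
  set (w := path w0 dx dy t) in *.
  assert (Hp : cd (path w0 dx dy) t (dx,dy)) by (apply cd_path).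
  pose (z' := Cplus (Cplus (Cmult (dx,dy) w) (Cmult w (dx,dy))) (0,0)).
  assert (Hz : cd (fun u => zf g (path w0 dx dy u)) t z').
  { unfold zf. apply cd_plus. apply cd_mult; exact Hp. apply cd_const. }
  pose proof (cd_sqm _ _ _ Hz (z_cut g w Hg Hw)) as Hs.
  fold w s in Hs.
  pose (s' := Cmult s (fst (Cmult z' (Cinv (zf g w))) / 2, snd (Cmult z' (Cinv (zf g w))) / 2)).
  fold s' in Hs.
  destruct (sw_nz g w Hg Hw) as [N1 N2]. fold s in N1, N2.
  destruct (s_rel g w Hg Hw) as [E1 [E2 [Hsp Hm]]]. fold s in E1, E2, Hsp, Hm.
  destruct (sq_facts (zf g w) (z_cond g w Hg Hw)) as [Ess _]. fold s in Ess.
  assert (Ns : s <> (0,0)).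
  { intro E. rewrite E in Hsp. simpl in Hsp. lra. }
  pose (Q' := Cplus (Cmult (Cminus s' (dx,dy)) (Cinv (Cplus s w)))
      (Cmult (Cminus s w) (Copp (Cmult (Cplus s' (dx,dy)) (Cmult (Cinv (Cplus s w)) (Cinv (Cplus s w))))))).
  assert (HQ : cd (fun u => Qfrac g (path w0 dx dy u)) t Q').
  { unfold Qfrac. apply cd_div. apply cd_minus. exact Hs. exact Hp. apply cd_plus. exact Hs. exact Hp. exact N1. }
  pose proof (Q_facts g w Hg Hw) as [Hcut _].
  assert (HkQ : Cmult Q' (Cinv (Qfrac g w)) = k).
  { unfold Q', s'. rewrite half_C. rewrite <- Ess. unfold Qfrac. fold (zf g w). fold s.
    unfold z'. change (0,0) with (RtoC 0).
    exact (alg s w (dx,dy) Ns N1 N2). }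
  split.
  - rewrite <- HkQ. apply d_lnmod. exact HQ. apply cut_nz. exact Hcut.
  - rewrite <- HkQ. apply d_arg. exact HQ. exact Hcut.
Qed.

Lemma aux_bound (p q dx dy g : R) : 0 < g -> 3 * g / 8 <= p * p + q * q ->
  Rabs (dx * p + dy * q) * sqrt g <= 3 * (Rabs dx + Rabs dy) * (p * p + q * q) /\
  Rabs (dy * p - dx * q) * sqrt g <= 3 * (Rabs dx + Rabs dy) * (p * p + q * q).
Proof. intros Hg HS.
  pose proof (sqrt_lt_R0 g Hg) as Hr0. pose proof (sqrt_sqrt g (Rlt_le _ _ Hg)) as Hr.
  set (r := sqrt g) in *. set (S := p * p + q * q) in *.
  set (P := Rabs p + Rabs q).
  assert (HP0 : 0 <= P) by (unfold P; pose proof (Rabs_pos p); pose proof (Rabs_pos q); lra).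
  assert (HPP : P * P <= 2 * S).
  { unfold P, S. pose proof (Rsqr_abs p) as A1. pose proof (Rsqr_abs q) as A2. unfold Rsqr in *.
    pose proof (Rabs_pos p); pose proof (Rabs_pos q). rewrite A1, A2. pose proof (pow2_ge_0 (Rabs p - Rabs q)). nra. }
  assert (HPr : P * r <= 3 * S).
  { assert (HH : (P * r) * (P * r) <= (3 * S) * (3 * S)).
    { replace ((P * r) * (P * r)) with ((P * P) * (r * r)) by ring. rewrite Hr. nra. }
    apply Rsqr_incr_0_var. unfold Rsqr. exact HH. lra. }
  assert (Hdx := Rabs_pos dx). assert (Hdy := Rabs_pos dy).
  assert (B1 : Rabs (dx * p + dy * q) <= (Rabs dx + Rabs dy) * P).
  { eapply Rle_trans. apply Rabs_triang. rewrite !Rabs_mult. unfold P.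
    pose proof (Rabs_pos p); pose proof (Rabs_pos q). nra. }
  assert (B2 : Rabs (dy * p - dx * q) <= (Rabs dx + Rabs dy) * P).
  { eapply Rle_trans. apply Rabs_triang. rewrite Rabs_Ropp, !Rabs_mult. unfold P.
    pose proof (Rabs_pos p); pose proof (Rabs_pos q). nra. }
  split.
  - apply Rle_trans with ((Rabs dx + Rabs dy) * P * r).
    apply Rmult_le_compat_r; lra. nra.
  - apply Rle_trans with ((Rabs dx + Rabs dy) * P * r).
    apply Rmult_le_compat_r; lra. nra.
Qed.

Lemma div_helper (a b S r : R) : 0 < S -> 0 < r -> a * r <= 3 * b * S ->
  2 * (a / S) <= 6 * b / r.
Proof. intros HS Hr H.
  assert (E : 6 * b / r - 2 * (a / S) = 2 * (3 * b * S - a * r) / (S * r)) by (field; lra).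
  assert (0 <= 2 * (3 * b * S - a * r) / (S * r)).
  { apply Rdiv_le_0_compat; nra. }
  lra. Qed.

Lemma k_bound (s : C) dx dy g : 0 < g -> 3 * g / 8 <= fst s ^ 2 + snd s ^ 2 ->
  let k := Cmult (Copp (RtoC 2)) (Cmult (dx,dy) (Cinv s)) in
  Rabs (fst k) <= 6 * (Rabs dx + Rabs dy) / sqrt g /\
  Rabs (snd k) <= 6 * (Rabs dx + Rabs dy) / sqrt g.
Proof. intros Hg HS k. destruct s as [p q]. simpl in HS.
  replace (p * (p * 1) + q * (q * 1)) with (p * p + q * q) in HS by ring.
  destruct (aux_bound p q dx dy g Hg HS) as [B1 B2].
  pose proof (sqrt_lt_R0 g Hg) as Hr0.
  assert (HS0 : 0 < p * p + q * q) by lra.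
  assert (Ek1 : fst k = -2 * ((dx * p + dy * q) / (p * p + q * q))).
  { unfold k, Cmult, Cinv, Copp, RtoC; simpl. field. lra. }
  assert (Ek2 : snd k = -2 * ((dy * p - dx * q) / (p * p + q * q))).
  { unfold k, Cmult, Cinv, Copp, RtoC; simpl. field. lra. }
  rewrite Ek1, Ek2. rewrite !Rabs_mult, !Rabs_div by lra.
  rewrite (Rabs_right (p*p+q*q)) by lra. rewrite Rabs_left by lra.
  replace (- (-2)) with 2 by ring.
  split; apply div_helper; auto; lra.
Qed.

Lemma F_conv w0 w1 t : F_inf w0 -> F_inf w1 -> 0 <= t <= 1 ->
  F_inf (path w0 (fst w1 - fst w0) (snd w1 - snd w0) t).
Proof. destruct w0 as [x0 y0]; destruct w1 as [x1 y1]. unfold F_inf, path; simpl.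
  intros [H1 [H2 H3]] [H4 [H5 H6]] Ht.
  rewrite Rabs_left1 in H3, H6 by lra.
  assert (Hf : x0 + t * (x1 - x0) <= 0) by nra.
  rewrite Rabs_left1 by lra. repeat split; nra.
Qed.

Lemma path0 w0 dx dy : path w0 dx dy 0 = w0.
Proof. destruct w0; unfold path; simpl; f_equal; ring. Qed.

Lemma path1 w0 w1 : path w0 (fst w1 - fst w0) (snd w1 - snd w0) 1 = w1.
Proof. destruct w0; destruct w1; unfold path; simpl; f_equal; ring. Qed.

Lemma mvt01 (f df : R -> R) (M : R) :
  (forall t, 0 <= t <= 1 -> is_derive f t (df t)) ->
  (forall t, 0 <= t <= 1 -> Rabs (df t) <= M) ->
  Rabs (f 1 - f 0) <= M.
Proof. intros Hd Hb.
  destruct (MVT_gen f 0 1 df) as [c [Hc E]].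
  - intros x Hx. rewrite Rmin_left in Hx by lra. rewrite Rmax_right in Hx by lra.
    apply Hd; lra.
  - intros x Hx. rewrite Rmin_left in Hx by lra. rewrite Rmax_right in Hx by lra.
    apply (dR_cont f x (df x)). apply Hd; lra.
  - rewrite Rmin_left in Hc by lra. rewrite Rmax_right in Hc by lra.
    rewrite E. rewrite Rminus_0_r, Rmult_1_r. apply Hb; lra.
Qed.

Lemma lip_AB g w0 w1 : 0 < g -> F_inf w0 -> F_inf w1 ->
  Rabs (ln (Cmod (Qfrac g w1)) - ln (Cmod (Qfrac g w0))) <=
     6 * (Rabs (fst w1 - fst w0) + Rabs (snd w1 - snd w0)) / sqrt g /\
  Rabs (arg_m (Qfrac g w1) - arg_m (Qfrac g w0)) <=
     6 * (Rabs (fst w1 - fst w0) + Rabs (snd w1 - snd w0)) / sqrt g.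
Proof. intros Hg H0 H1.
  set (dx := fst w1 - fst w0). set (dy := snd w1 - snd w0).
  set (kf := fun u => Cmult (Copp (RtoC 2)) (Cmult (dx,dy) (Cinv (sq_m (zf g (path w0 dx dy u)))))).
  assert (Hbd : forall t, 0 <= t <= 1 ->
    Rabs (fst (kf t)) <= 6 * (Rabs dx + Rabs dy) / sqrt g /\
    Rabs (snd (kf t)) <= 6 * (Rabs dx + Rabs dy) / sqrt g).
  { intros t Ht. pose proof (F_conv w0 w1 t H0 H1 Ht) as Hw. fold dx dy in Hw.
    destruct (s_rel g _ Hg Hw) as [_ [_ [_ Hm]]].
    apply k_bound; auto. }
  assert (Hder : forall t, 0 <= t <= 1 ->
    is_derive (fun u => ln (Cmod (Qfrac g (path w0 dx dy u)))) t (fst (kf t)) /\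
    is_derive (fun u => arg_m (Qfrac g (path w0 dx dy u))) t (snd (kf t))).
  { intros t Ht. pose proof (F_conv w0 w1 t H0 H1 Ht) as Hw. fold dx dy in Hw.
    exact (deriv_path g w0 dx dy t Hg Hw). }
  split.
  - pose proof (mvt01 (fun u => ln (Cmod (Qfrac g (path w0 dx dy u)))) (fun t => fst (kf t))
      (6 * (Rabs dx + Rabs dy) / sqrt g)) as HM.
    simpl in HM. unfold dx, dy in HM. rewrite path0, path1 in HM. apply HM.
    + intros t Ht. apply Hder; auto.
    + intros t Ht. apply Hbd; auto.
  - pose proof (mvt01 (fun u => arg_m (Qfrac g (path w0 dx dy u))) (fun t => snd (kf t))
      (6 * (Rabs dx + Rabs dy) / sqrt g)) as HM.
    simpl in HM. unfold dx, dy in HM. rewrite path0, path1 in HM. apply HM.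
    + intros t Ht. apply Hder; auto.
    + intros t Ht. apply Hbd; auto.
Qed.


Definition Nm (w : C) : R := Rabs (fst w) + Rabs (snd w).

Ltac rabs_solve := unfold Nm, Cminus, Cplus, Copp in *; simpl in *;
  repeat (match goal with |- context [Rabs ?x] =>
     destruct (Rle_lt_dec 0 x); [rewrite (Rabs_right x) by lra | rewrite (Rabs_left x) by lra] end);
  lra.

Lemma Nm_pos w : 0 <= Nm w.
Proof. unfold Nm. pose proof (Rabs_pos (fst w)). pose proof (Rabs_pos (snd w)). lra. Qed.

Lemma Nm_tri a b c : Nm (Cminus a c) <= Nm (Cminus a b) + Nm (Cminus b c).
Proof. unfold Nm, Cminus, Cplus, Copp; simpl.
  pose proof (Rabs_triang (fst a - fst b) (fst b - fst c)).
  pose proof (Rabs_triang (snd a - snd b) (snd b - snd c)).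
  replace (fst a - fst b + (fst b - fst c)) with (fst a + - fst c) in * by ring.
  replace (snd a - snd b + (snd b - snd c)) with (snd a + - snd c) in * by ring.
  unfold Rminus in *. lra. Qed.

Lemma Nm_sym a b : Nm (Cminus a b) = Nm (Cminus b a).
Proof. unfold Nm, Cminus, Cplus, Copp; simpl.
  rewrite <- (Rabs_Ropp (fst a + - fst b)), <- (Rabs_Ropp (snd a + - snd b)).
  f_equal; f_equal; ring. Qed.

Lemma Nm_zero a b : Nm (Cminus a b) = 0 -> a = b.
Proof. destruct a as [a1 a2], b as [b1 b2]. unfold Nm, Cminus, Cplus, Copp; simpl. intros H.
  pose proof (Rabs_pos (a1 + - b1)). pose proof (Rabs_pos (a2 + - b2)).
  assert (E1 : Rabs (a1 + - b1) = 0) by lra. assert (E2 : Rabs (a2 + - b2) = 0) by lra.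
  apply Rabs_eq_0 in E1. apply Rabs_eq_0 in E2. f_equal; lra. Qed.

Lemma cv_Nm (u : nat -> C) (l : C) :
  Un_cv (fun n => fst (u n)) (fst l) -> Un_cv (fun n => snd (u n)) (snd l) ->
  forall eps, 0 < eps -> exists N, forall n, (n >= N)%nat -> Nm (Cminus (u n) l) < eps.
Proof. intros H1 H2 eps He.
  destruct (H1 (eps/2)) as [N1 HN1]; [lra|]. destruct (H2 (eps/2)) as [N2 HN2]; [lra|].
  exists (Nat.max N1 N2). intros n Hn.
  assert (A1 := HN1 n ltac:(lia)). assert (A2 := HN2 n ltac:(lia)).
  unfold R_dist in *. unfold Nm, Cminus, Cplus, Copp; simpl. unfold Rminus in *. lra. Qed.

Lemma closed_phi (phi : C -> R) (K : R) (u : nat -> C) (l : C) :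
  0 <= K -> (forall a b, Rabs (phi a - phi b) <= K * Nm (Cminus a b)) ->
  (forall n, phi (u n) <= 0) ->
  Un_cv (fun n => fst (u n)) (fst l) -> Un_cv (fun n => snd (u n)) (snd l) ->
  phi l <= 0.
Proof. intros HK Hl Hu H1 H2.
  destruct (Rle_dec (phi l) 0) as [|Hn]; auto. exfalso.
  destruct (cv_Nm u l H1 H2 (phi l / (K + 1))) as [N HN].
  { apply Rdiv_lt_0_compat; lra. }
  specialize (HN N (Nat.le_refl N)). specialize (Hu N). specialize (Hl (u N) l).
  assert (K * Nm (Cminus (u N) l) <= K * (phi l / (K + 1))).
  { apply Rmult_le_compat_l; lra. }
  assert (K * (phi l / (K + 1)) < phi l).
  { apply (Rmult_lt_reg_r (K+1)); [lra|]. field_simplify; lra. }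
  assert (Hab : phi l - phi (u N) <= Rabs (phi (u N) - phi l)).
  { rewrite <- Rabs_Ropp. replace (- (phi (u N) - phi l)) with (phi l - phi (u N)) by ring.
    apply Rle_abs. }
  lra.
Qed.

Lemma pow_le1 (L : R) (k : nat) : 0 <= L <= 1 -> L ^ k <= 1.
Proof. intros H. induction k; simpl; [lra|]. pose proof (pow_le L k (proj1 H)). nra. Qed.

Lemma banach (D : C -> Prop) (f : C -> C) (L : R) (w0 : C) :
  0 <= L < 1 -> D w0 -> (forall w, D w -> D (f w)) ->
  (forall a b, D a -> D b -> Nm (Cminus (f a) (f b)) <= L * Nm (Cminus a b)) ->
  (forall (u : nat -> C) (l : C), (forall n, D (u n)) ->
     Un_cv (fun n => fst (u n)) (fst l) -> Un_cv (fun n => snd (u n)) (snd l) -> D l) ->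
  exists w, D w /\ f w = w.
Proof. intros HL HD0 Hinv Hlip Hcl.
  set (u := fun n => Nat.iter n f w0).
  assert (HuD : forall n, D (u n)).
  { induction n; simpl; auto. }
  set (C0 := Nm (Cminus (u 1%nat) (u 0%nat))).
  assert (HC0 : 0 <= C0) by apply Nm_pos.
  assert (Hstep : forall n, Nm (Cminus (u (S n)) (u n)) <= C0 * L ^ n).
  { induction n.
    - rewrite pow_O, Rmult_1_r. apply Rle_refl.
    - change (u (S (S n))) with (f (u (S n))). change (u (S n)) with (f (u n)) at 2.
      eapply Rle_trans. apply Hlip; auto.
      change (f (u n)) with (u (S n)). simpl.
      pose proof (pow_le L n (proj1 HL)).
      change (f (u n)) with (u (S n)) in *. pose proof (Nm_pos (Cminus (u (S n)) (u n))). nra. }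
  assert (Hgap : forall n p, Nm (Cminus (u (n + p)%nat) (u n)) <= C0 * L ^ n * (1 - L ^ p) / (1 - L)).
  { intros n p. induction p.
    - rewrite Nat.add_0_r. unfold Nm, Cminus, Cplus, Copp; simpl.
      replace (fst (u n) + - fst (u n)) with 0 by ring. replace (snd (u n) + - snd (u n)) with 0 by ring.
      rewrite Rabs_R0. unfold Rdiv. replace (1 - 1) with 0 by ring. lra.
    - eapply Rle_trans. apply (Nm_tri _ (u (n + p)%nat)).
      replace (n + S p)%nat with (S (n + p)) by lia.
      eapply Rle_trans. apply Rplus_le_compat. apply Hstep. apply IHp.
      rewrite pow_add. simpl.
      apply Req_le. field. lra. }
  assert (Hgap' : forall n m, (n <= m)%nat -> Nm (Cminus (u m) (u n)) <= C0 * L ^ n / (1 - L)).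
  { intros n m Hnm. replace m with (n + (m - n))%nat by lia.
    eapply Rle_trans. apply Hgap.
    pose proof (pow_le L (m - n) (proj1 HL)). pose proof (pow_le L n (proj1 HL)).
    apply Rmult_le_compat_r. left; apply Rinv_0_lt_compat; lra. assert (0 <= C0 * L ^ n) by nra. nra. }
  assert (Hcau : forall eps, 0 < eps -> exists N, forall n m, (n >= N)%nat -> (m >= N)%nat ->
     Nm (Cminus (u m) (u n)) < eps).
  { intros eps He.
    destruct (pow_lt_1_zero L ltac:(rewrite Rabs_right; lra) (eps * (1 - L) / (C0 + 1))) as [N HN].
    { apply Rdiv_lt_0_compat; nra. }
    exists N. intros n m Hn Hm.
    assert (HLN : L ^ N < eps * (1 - L) / (C0 + 1)).
    { specialize (HN N (Nat.le_refl N)). rewrite Rabs_right in HN; auto. apply Rle_ge, pow_le; lra. }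
    assert (Hpow : forall k, (k >= N)%nat -> L ^ k <= L ^ N).
    { intros k Hk. replace k with (N + (k - N))%nat by lia. rewrite pow_add.
      pose proof (pow_le L N (proj1 HL)).
      assert (L ^ (k - N) <= 1) by (apply pow_le1; lra). 
      pose proof (pow_le L (k - N) (proj1 HL)). nra. }
    assert (Hb : forall k, (k >= N)%nat -> C0 * L ^ k / (1 - L) < eps).
    { intros k Hk. pose proof (Hpow k Hk).
      assert (C0 * L ^ k <= C0 * (eps * (1 - L) / (C0 + 1))) by nra.
      apply (Rmult_lt_reg_r (1 - L)); [lra|].
      unfold Rdiv. rewrite Rmult_assoc, Rinv_l, Rmult_1_r by lra.
      assert (C0 * (eps * (1 - L) / (C0 + 1)) < eps * (1 - L)).
      { unfold Rdiv. apply (Rmult_lt_reg_r (C0 + 1)); [lra|].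
        rewrite !Rmult_assoc, Rinv_l by lra. nra. }
      unfold Rdiv in *. lra. }
    destruct (Compare_dec.le_lt_dec n m) as [Hle|Hlt].
    - eapply Rle_lt_trans. apply Hgap'; auto. apply Hb; auto.
    - rewrite Nm_sym. eapply Rle_lt_trans. apply Hgap'; lia. apply Hb; auto. }
  assert (Hc1 : Cauchy_crit (fun n => fst (u n))).
  { intros eps He. destruct (Hcau eps He) as [N HN]. exists N. intros n m Hn Hm.
    specialize (HN m n Hm Hn). unfold R_dist. unfold Nm, Cminus, Cplus, Copp in HN; simpl in HN.
    pose proof (Rabs_pos (snd (u n) + - snd (u m))). unfold Rminus. lra. }
  assert (Hc2 : Cauchy_crit (fun n => snd (u n))).
  { intros eps He. destruct (Hcau eps He) as [N HN]. exists N. intros n m Hn Hm.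
    specialize (HN m n Hm Hn). unfold R_dist. unfold Nm, Cminus, Cplus, Copp in HN; simpl in HN.
    pose proof (Rabs_pos (fst (u n) + - fst (u m))). unfold Rminus. lra. }
  destruct (Rcomplete.R_complete _ Hc1) as [lx Hlx].
  destruct (Rcomplete.R_complete _ Hc2) as [ly Hly].
  set (l := (lx, ly)).
  assert (HDl : D l) by (apply (Hcl u l); auto).
  exists l. split; auto.
  apply Nm_zero.
  destruct (Req_dec (Nm (Cminus (f l) l)) 0) as [|Hne]; auto. exfalso.
  pose proof (Nm_pos (Cminus (f l) l)) as Hp.
  set (e := Nm (Cminus (f l) l)) in *.
  destruct (cv_Nm u l Hlx Hly (e / 2)) as [N HN]; [lra|].
  assert (H1 := HN N (Nat.le_refl _)). assert (H2 := HN (S N) ltac:(lia)).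
  assert (H3 : Nm (Cminus (f l) (f (u N))) <= L * Nm (Cminus l (u N))) by (apply Hlip; auto).
  rewrite (Nm_sym l) in H3. change (f (u N)) with (u (S N)) in H3.
  pose proof (Nm_tri (f l) (u (S N)) l).
  pose proof (Nm_pos (Cminus (u N) l)).
  assert (L * Nm (Cminus (u N) l) <= Nm (Cminus (u N) l)) by nra.
  unfold e in *. lra.
Qed.

Lemma lip_G g j Rr w0 w1 : 0 < g -> 0 < Rr -> F_inf w0 -> F_inf w1 ->
  Nm (Cminus (G_fun g j Rr w1) (G_fun g j Rr w0)) <=
  6 / (Rr * sqrt g) * Nm (Cminus w1 w0).
Proof. intros Hg HR H0 H1.
  destruct (lip_AB g w0 w1 Hg H0 H1) as [HA HB].
  pose proof (sqrt_lt_R0 g Hg) as Hr0.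
  unfold Nm, G_fun, Cminus, Cplus, Copp, A_fun, B_fun; simpl.
  set (N := Rabs (fst w1 + - fst w0) + Rabs (snd w1 + - snd w0)).
  fold (Rminus (fst w1) (fst w0)) (Rminus (snd w1) (snd w0)) in N.
  fold N in HA, HB.
  set (a1 := ln (Cmod (Qfrac g w1))) in *. set (a0 := ln (Cmod (Qfrac g w0))) in *.
  set (b1 := arg_m (Qfrac g w1)) in *. set (b0 := arg_m (Qfrac g w0)) in *.
  replace (- (b1 + 2 * PI * INR j) / (2 * Rr) + - (- (b0 + 2 * PI * INR j) / (2 * Rr)))
    with (- (b1 - b0) / (2 * Rr)) by (field; lra).
  replace (a1 / (2 * Rr) + - (a0 / (2 * Rr))) with ((a1 - a0) / (2 * Rr)) by (field; lra).
  rewrite !Rabs_div by lra. rewrite Rabs_Ropp. rewrite (Rabs_right (2 * Rr)) by lra.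
  assert (E : 6 / (Rr * sqrt g) * N = 6 * N / sqrt g / (2 * Rr) + 6 * N / sqrt g / (2 * Rr))
    by (field; lra).
  rewrite E. apply Rplus_le_compat; unfold Rdiv; apply Rmult_le_compat_r;
  try (left; apply Rinv_0_lt_compat; lra); auto.
Qed.

Lemma Rr_bound g Rr : 0 < g ->
  600 * (Rpower g (3 / 4) + Rpower g (- (3 / 4))) <= Rr -> 600 <= Rr * sqrt g.
Proof. intros Hg H.
  rewrite <- Rpower_sqrt by exact Hg. unfold Rpower in *.
  pose proof (exp_pos (3/4 * ln g)). pose proof (exp_pos (- (3/4) * ln g)).
  pose proof (exp_pos (/2 * ln g)).
  destruct (Rle_dec 0 (ln g)).
  - assert (1 <= exp (3/4 * ln g)) by (pose proof (exp_ineq1_le (3/4 * ln g)); nra).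
    assert (1 <= exp (/2 * ln g)) by (pose proof (exp_ineq1_le (/2 * ln g)); nra).
    nra.
  - assert (E : exp (- (3/4) * ln g) * exp (/2 * ln g) = exp (- (1/4) * ln g)).
    { rewrite <- exp_plus. f_equal. field. }
    assert (1 <= exp (- (1/4) * ln g)) by (pose proof (exp_ineq1_le (- (1/4) * ln g)); nra).
    nra.
Qed.

Lemma Q0 g : 0 < g -> Qfrac g (0,0) = (1,0).
Proof. intros Hg.
  assert (HF : F_inf (0,0)) by (unfold F_inf; simpl; rewrite Rabs_R0; lra).
  destruct (s_rel g (0,0) Hg HF) as [_ [_ [Hsp _]]].
  unfold Qfrac. fold (zf g (0,0)). set (s := sq_m (zf g (0,0))) in *. clearbody s.
  assert (Ns : s <> RtoC 0).
  { intro E. rewrite E in Hsp. simpl in Hsp. lra. }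
  change (0,0) with (RtoC 0). change (1,0) with (RtoC 1).
  field. exact Ns.
Qed.

Lemma G0 g j Rr : 0 < g -> 0 < Rr ->
  G_fun g j Rr (0,0) = (- (PI * INR j / Rr), 0).
Proof. intros Hg HR. unfold G_fun, A_fun, B_fun. rewrite Q0 by exact Hg.
  rewrite arg_pos_re by lra. replace (0/1) with 0 by field. rewrite atan_0.
  change (1,0) with (RtoC 1). rewrite Cmod_1, ln_1. f_equal; field; lra.
Qed.

Lemma lipphi1 : forall a b : C, Rabs (fst a - fst b) <= 1 * Nm (Cminus a b).
Proof. intros. rabs_solve. Qed.
Lemma lipphi2 : forall a b : C, Rabs (- snd a - - snd b) <= 1 * Nm (Cminus a b).
Proof. intros. rabs_solve. Qed.
Lemma lipphi3 : forall a b : C, Rabs ((2 * snd a - Rabs (fst a)) - (2 * snd b - Rabs (fst b))) <= 2 * Nm (Cminus a b).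
Proof. intros. rabs_solve. Qed.
Lemma lipphi4 c : forall a b : C, Rabs ((Nm (Cminus a (- c, 0)) - c / 2) - (Nm (Cminus b (- c, 0)) - c / 2)) <= 1 * Nm (Cminus a b).
Proof. intros. rabs_solve. Qed.

Theorem proposition2p3 (gamma Rr : R) :
  0 < gamma ->
  600 * (Rpower gamma (3 / 4) + Rpower gamma (- (3 / 4))) <= Rr ->
  (forall j : nat, (1 <= j)%nat ->
     exists w : C,
       F_inf w /\ w = G_fun gamma j Rr w /\
       (forall w' : C, F_inf w' -> w' = G_fun gamma j Rr w' -> w' = w) /\
       F_j gamma j w) /\
  (forall (j k : nat) (w1 w2 : C), (1 <= j)%nat -> (1 <= k)%nat -> j <> k ->
     F_inf w1 -> w1 = G_fun gamma j Rr w1 ->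
     F_inf w2 -> w2 = G_fun gamma k Rr w2 -> w1 <> w2).
Proof.
  intros Hg HR.
  pose proof (Rr_bound gamma Rr Hg HR) as HRs.
  pose proof (sqrt_lt_R0 gamma Hg) as Hsq.
  assert (HRp : 0 < Rr).
  { destruct (Rle_dec Rr 0); [|lra]. assert (Rr * sqrt gamma <= 0) by nra. lra. }
  set (L := 6 / (Rr * sqrt gamma)).
  assert (HL : 0 <= L <= 1/100).
  { unfold L. split. apply Rlt_le, Rdiv_lt_0_compat; nra.
    apply (Rmult_le_reg_r (Rr * sqrt gamma)); [nra|].
    unfold Rdiv. rewrite Rmult_assoc, Rinv_l by nra. lra. }
  assert (Hlip : forall j w0 w1, F_inf w0 -> F_inf w1 ->
    Nm (Cminus (G_fun gamma j Rr w1) (G_fun gamma j Rr w0)) <= L * Nm (Cminus w1 w0)).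
  { intros. apply lip_G; auto. }
  split.
  - intros j Hj.
    assert (HJ : 1 <= INR j) by (apply (le_INR 1 j); lia).
    set (c := PI * INR j / Rr).
    assert (Hc : 0 < c) by (unfold c; pose proof PI_RGT_0; apply Rdiv_lt_0_compat; nra).
    pose proof (G0 gamma j Rr Hg HRp) as HG0. fold c in HG0.
    assert (HF0 : F_inf (0,0)) by (unfold F_inf; simpl; rewrite Rabs_R0; lra).
    set (D := fun w => F_inf w /\ Nm (Cminus w (- c, 0)) <= c / 2).
    destruct (banach D (G_fun gamma j Rr) L (- c, 0)) as [w [[HwF HwN] Hfix]].
    + lra.
    + split. unfold F_inf; simpl. rewrite Rabs_left by lra. lra.
      unfold Nm, Cminus, Cplus, Copp; simpl.
      replace (- c + - - c) with 0 by ring. replace (0 + - 0) with 0 by ring. rewrite Rabs_R0. lra.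
    + intros w [Hw1 Hw2].
      assert (HN : Nm (Cminus (G_fun gamma j Rr w) (- c, 0)) <= c / 2).
      { rewrite <- HG0. eapply Rle_trans. apply Hlip; auto.
        assert (Nm (Cminus w (0,0)) <= c / 2 + c).
        { eapply Rle_trans. apply (Nm_tri w (- c, 0) (0,0)).
          assert (Nm (Cminus (- c, 0) (0, 0)) = c).
          { unfold Nm, Cminus, Cplus, Copp; simpl. rewrite Rabs_left by lra.
            replace (0 + - 0) with 0 by ring. rewrite Rabs_R0. ring. }
          lra. }
        pose proof (Nm_pos (Cminus w (0,0))). nra. }
      split; auto.
      destruct (Q_facts gamma w Hg Hw1) as [_ HQ1].
      assert (HA : 0 <= A_fun gamma w).
      { unfold A_fun. rewrite <- ln_1. apply ln_le; lra. }
      assert (Hs : 0 <= snd (G_fun gamma j Rr w)).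
      { unfold G_fun; simpl. apply Rdiv_le_0_compat; lra. }
      revert HN Hs. destruct (G_fun gamma j Rr w) as [a b]. unfold F_inf; simpl.
      unfold Nm, Cminus, Cplus, Copp; simpl. intros HN Hs.
      replace (b + - 0) with b in HN by ring.
      rewrite (Rabs_right b) in HN by lra.
      destruct (Rle_lt_dec 0 (a + - - c)).
      * rewrite Rabs_right in HN by lra. rewrite Rabs_left by lra. lra.
      * rewrite Rabs_left in HN by lra. rewrite Rabs_left by lra. lra.
    + intros a b [Ha _] [Hb _]. apply Hlip; auto.
    + intros u l Hu H1 H2. split; [split; [|split]|].
      * apply (closed_phi (fun w => fst w) 1 u l); auto; try lra.
        apply lipphi1. intros n. destruct (Hu n) as [[X _] _]. exact X.
      * assert (- snd l <= 0); [|lra].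
        apply (closed_phi (fun w => - snd w) 1 u l); auto; try lra.
        apply lipphi2. intros n. destruct (Hu n) as [[_ [X _]] _]. simpl. lra.
      * assert ((fun w => 2 * snd w - Rabs (fst w)) l <= 0); [|simpl in *; lra].
        apply (closed_phi (fun w => 2 * snd w - Rabs (fst w)) 2 u l); auto; try lra.
        apply lipphi3. intros n. destruct (Hu n) as [[_ [_ X]] _]. simpl. lra.
      * assert ((fun w => Nm (Cminus w (- c, 0)) - c / 2) l <= 0); [|simpl in *; lra].
        apply (closed_phi (fun w => Nm (Cminus w (- c, 0)) - c / 2) 1 u l); auto; try lra.
        apply lipphi4. intros n. destruct (Hu n) as [_ X]. simpl. lra.
    + exists w. split; [exact HwF|split; [symmetry; exact Hfix|split]].
      * intros w' Hw' Ew'.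
        apply Nm_zero.
        assert (Nm (Cminus w' w) <= L * Nm (Cminus w' w)).
        { rewrite Ew' at 1. rewrite <- Hfix at 1. apply Hlip; auto. }
        pose proof (Nm_pos (Cminus w' w)). nra.
      * split; auto.
        assert (E1 : fst w = - B_fun gamma j w / (2 * Rr)) by (rewrite <- Hfix at 1; reflexivity).
        assert (E2 : snd w = A_fun gamma w / (2 * Rr)) by (rewrite <- Hfix at 1; reflexivity).
        destruct HwF as [X1 [X2 X3]].
        rewrite Rabs_left1 in X3 by lra.
        assert (HA : A_fun gamma w = 2 * Rr * snd w) by (rewrite E2; field; lra).
        assert (HB : B_fun gamma j w = - (2 * Rr) * fst w) by (rewrite E1; field; lra).
        rewrite HA, HB. rewrite Rabs_right by nra. nra.
  - intros j k w1 w2 Hj Hk Hjk F1 E1 F2 E2 Heq. subst w2.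
    assert (E : fst (G_fun gamma j Rr w1) = fst (G_fun gamma k Rr w1)) by (rewrite <- E1, <- E2; reflexivity).
    unfold G_fun, B_fun in E; simpl in E.
    assert (INR j = INR k).
    { pose proof PI_RGT_0.
      assert (2 * PI * INR j = 2 * PI * INR k).
      { apply (Rmult_eq_reg_r (/ (2 * Rr))). 2: { apply Rinv_neq_0_compat; lra. }
        unfold Rdiv in E. lra. }
      nra. }
    apply Hjk. apply INR_eq. auto.
Qed.
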